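(* Let $[\mu]\in\mathbb PV_n$ be a critical point of $F_n$ and $[\lambda]\in\mathbb PV_m$ a critical point of $F_m$. Then there exists $t\in\mathbb C$ such that $[\mu\oplus t\lambda]$ is a critical point of $F_{n+m}$, where $\mu\oplus t\lambda$ is the algebra on $\mathbb C^{n+m}=\mathbb C^n\oplus\mathbb C^m$ (orthogonal sum) given by $(\mu\oplus t\lambda)(X_1+Y_1,X_2+Y_2)=\mu(X_1,X_2)+t\lambda(Y_1,Y_2)$ for $X_i\in\mathbb C^n$, $Y_i\in\mathbb C^m$.
   Context: $V_k$ denotes the space of bilinear maps $\mathbb C^k\times\mathbb C^k\to\mathbb C^k$ with the standard Hermitian inner products; $F_k:\mathbb PV_k\to\mathbb R$ is $F_k([\mu])=\operatorname{tr}\mathrm M_\mu^2/\|\mu\|^4$, where $\|\mu\|^2=\sum_{i,j}\|\mu(X_i,X_j)\|^2$ for an orthonormal basis $\{X_i\}$, and $\mathrm M_\mu=2\sum_i L^\mu_{X_i}(L^\mu_{X_i})^*-2\sum_i (L^\mu_{X_i})^*L^\mu_{X_i}-2\sum_i (R^\mu_{X_i})^*R^\mu_{X_i}$ with $L^\mu_XY=\mu(X,Y)$, $R^\mu_XY=\mu(Y,X)$. It is known that $[\mu]$ is a critical point of $F_k$ iff $\mathrm M_\mu=c_\mu I+D_\mu$ for some $c_\mu\in\mathbb R$ and some derivation $D_\mu$ of $\mu$. *)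

(* Defs.v *)
From HB Require Import structures.
From mathcomp Require Import all_boot all_order all_algebra.
From mathcomp Require Import all_classical all_reals all_analysis.
From mathcomp Require Import complex.
Import Order.TTheory GRing.Theory Num.Theory.

Set Implicit Arguments.
Unset Strict Implicit.
Unset Printing Implicit Defensive.

Local Open Scope ring_scope.

Section CriticalPoints.
Variable R : realType.
Local Notation C := (R[i]).

(* V_k : a bilinear map C^k x C^k -> C^k, given by its values on the
   standard (orthonormal) basis: mu i j = mu(e_i, e_j) in C^k. *)
Definition bilmap (k : nat) := 'I_k -> 'I_k -> 'cV[C]_k.

Definition bil_apply k (mu : bilmap k) (X Y : 'cV[C]_k) : 'cV[C]_k :=
  \sum_(i < k) \sum_(j < k) (X i 0 * Y j 0) *: mu i j.

(* matrices of L^mu_{e_i} : Y |-> mu(e_i, Y) and R^mu_{e_i} : Y |-> mu(Y, e_i) *)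
Definition Lmat k (mu : bilmap k) (i : 'I_k) : 'M[C]_k :=
  \matrix_(l < k, j < k) mu i j l 0.
Definition Rmat k (mu : bilmap k) (i : 'I_k) : 'M[C]_k :=
  \matrix_(l < k, j < k) mu j i l 0.

Definition adjmx k (A : 'M[C]_k) : 'M[C]_k := (map_mx Num.conj A)^T.

Definition Mmu k (mu : bilmap k) : 'M[C]_k :=
  (2 : C) *: (\sum_(i < k) Lmat mu i *m adjmx (Lmat mu i))
  - (2 : C) *: (\sum_(i < k) adjmx (Lmat mu i) *m Lmat mu i)
  - (2 : C) *: (\sum_(i < k) adjmx (Rmat mu i) *m Rmat mu i).

Definition sqmod (z : C) : R := complex.Re z ^+ 2 + complex.Im z ^+ 2.

Definition normsq k (mu : bilmap k) : R :=
  \sum_(i < k) \sum_(j < k) \sum_(l < k) sqmod (mu i j l 0).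

(* F_k(mu) = tr (M_mu^2) / ||mu||^4  (tr M_mu^2 is real since M_mu is
   Hermitian; we take its real part to view F_k as real-valued). *)
Definition Fk k (mu : bilmap k) : R :=
  complex.Re (\tr (Mmu mu *m Mmu mu)) / (normsq mu) ^+ 2.

(* [mu] is a critical point of F_k on PV_k: mu is nonzero and the
   (scale-invariant) function F_k is critical at mu on V_k \ {0}, i.e. every
   real directional derivative of F_k at mu vanishes. *)
Definition critical k (mu : bilmap k) : Prop :=
  (exists i j, mu i j != 0) /\
  forall nu : bilmap k,
    is_derive (0 : R) (1 : R)
      (fun s : R => Fk (fun i j => mu i j + ((s%:C)%C : C) *: nu i j)) (0 : R).

End CriticalPoints.

(* Main.v *)
Require Import Defs.
From HB Require Import structures.
From mathcomp Require Import all_boot all_order all_algebra.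
From mathcomp Require Import all_classical all_reals all_analysis.
From mathcomp Require Import complex.
Import Order.TTheory GRing.Theory Num.Theory.
Local Open Scope ring_scope.
From mathcomp Require Import ring lra.
Set Implicit Arguments.
Unset Strict Implicit.

Section Work.
Variable R : realType.
Local Notation C := (R[i]).
Local Notation Re := complex.Re.
Local Notation Im := complex.Im.

Lemma ReM (x y : C) : Re (x * y) = Re x * Re y - Im x * Im y.
Proof. by case: x => a b; case: y => c d. Qed.
Lemma ReD (x y : C) : Re (x + y) = Re x + Re y.
Proof. by case: x => a b; case: y => c d. Qed.
Lemma ImD (x y : C) : Im (x + y) = Im x + Im y.
Proof. by case: x => a b; case: y => c d. Qed.
Lemma ReN (x : C) : Re (- x) = - Re x. Proof. by case: x. Qed.
Lemma ReB (x y : C) : Re (x - y) = Re x - Re y. Proof. by rewrite ReD ReN. Qed.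
Lemma ReJ (x:C) : Re (Num.conj x) = Re x. Proof. by case: x. Qed.
Lemma ImJ (x:C) : Im (Num.conj x) = - Im x. Proof. by case: x. Qed.
Lemma ReRM (s : R) (z : C) : Re ((s%:C)%C * z) = s * Re z.
Proof. by case: z => a b /=; rewrite mul0r subr0. Qed.
Lemma conjR (s : R) : Num.conj ((s%:C)%C : C) = (s%:C)%C.
Proof. exact: conjc_real. Qed.
Lemma Re_sum I (r : seq I) (P : pred I) (F : I -> C) :
  Re (\sum_(i <- r | P i) F i) = \sum_(i <- r | P i) Re (F i).
Proof. by elim/big_rec2: _ => // i y1 y2 _ <-; rewrite ReD. Qed.
Lemma Re_sqmod (z : C) : Re (z * Num.conj z) = sqmod z.
Proof. case: z => a b; rewrite /sqmod /=. lra. Qed.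
Lemma sqmod_ge0 (z : C) : 0 <= sqmod z.
Proof. rewrite /sqmod; apply: addr_ge0; exact: sqr_ge0. Qed.

Lemma ajD k (A B : 'M[C]_k) : adjmx (A + B) = adjmx A + adjmx B.
Proof. by apply/matrixP=> i j; rewrite !mxE rmorphD. Qed.
Lemma ajN k (A : 'M[C]_k) : adjmx (- A) = - adjmx A.
Proof. by apply/matrixP=> i j; rewrite !mxE rmorphN. Qed.
Lemma ajB k (A B : 'M[C]_k) : adjmx (A - B) = adjmx A - adjmx B.
Proof. by rewrite ajD ajN. Qed.
Lemma ajZ k c (A : 'M[C]_k) : adjmx (c *: A) = Num.conj c *: adjmx A.
Proof. by apply/matrixP=> i j; rewrite !mxE rmorphM. Qed.
Lemma aj0 k : adjmx (0 : 'M[C]_k) = 0.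
Proof. by apply/matrixP=> i j; rewrite !mxE rmorph0. Qed.
Lemma ajK k (A : 'M[C]_k) : adjmx (adjmx A) = A.
Proof. by apply/matrixP=> i j; rewrite !mxE conjCK. Qed.
Lemma ajM k (A B : 'M[C]_k) : adjmx (A *m B) = adjmx B *m adjmx A.
Proof.
apply/matrixP=> i j; rewrite !mxE rmorph_sum; apply: eq_bigr => l _.
by rewrite !mxE rmorphM mulrC.
Qed.
Lemma aj_sum k I (r : seq I) (P : pred I) (F : I -> 'M[C]_k) :
  adjmx (\sum_(i <- r | P i) F i) = \sum_(i <- r | P i) adjmx (F i).
Proof. by elim/big_rec2: _ => [|i y1 y2 _ <-]; rewrite ?aj0 ?ajD. Qed.

Lemma sum_expand k (X Y X' Y' : 'I_k -> 'M[C]_k) (c : C) :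
  \sum_i (X i + c *: Y i) *m (X' i + c *: Y' i) =
  \sum_i X i *m X' i + c *: (\sum_i X i *m Y' i + \sum_i Y i *m X' i)
  + (c * c) *: \sum_i Y i *m Y' i.
Proof.
under eq_bigr do rewrite mulmxDl !mulmxDr -!scalemxAl -!scalemxAr scalerA.
rewrite !big_split /= -!scaler_sumr scalerDr.
by rewrite !addrA; congr (_ + _); rewrite -!addrA; congr (_ + _); rewrite addrC.
Qed.

Lemma rat_deriv (a0 a1 a2 a3 a4 b0 b1 b2 : R) : b0 != 0 ->
  is_derive (0:R) (1:R)
   (fun s : R => (a0 + s * a1 + s ^+ 2 * a2 + s ^+ 3 * a3 + s ^+ 4 * a4) /
                 (b0 + s * b1 + s ^+ 2 * b2) ^+ 2)
   ((a1 * b0 - 2 * a0 * b1) / b0 ^+ 3).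
Proof.
move=> hb.
have hf : is_derive (0:R) (1:R)
   (fun s : R => a0 + s * a1 + s ^+ 2 * a2 + s ^+ 3 * a3 + s ^+ 4 * a4) a1.
  apply: is_derive_eq. rewrite /GRing.scale /=. ring.
have hg : is_derive (0:R) (1:R) (fun s : R => (b0 + s * b1 + s ^+ 2 * b2) ^+ 2)
   (2 * b0 * b1).
  apply: is_derive_eq. rewrite /GRing.scale /=. ring.
have hg0 : (fun s : R => (b0 + s * b1 + s ^+ 2 * b2) ^+ 2) 0 != 0.
  by rewrite /= mul0r expr0n /= mul0r !addr0 sqrf_eq0.
have hv := @is_deriveV R (fun s : R => (b0 + s * b1 + s ^+ 2 * b2) ^+ 2) 0 (2 * b0 * b1) 1 hg0 hg.
have := is_deriveM hf hv.
move=> h; apply: (is_derive_eq h).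
rewrite /GRing.scale /= mul0r expr0n /= mul0r !addr0.
field. done.
Qed.

Definition PL k (a b : bilmap R k) : 'M[C]_k := \sum_i Lmat a i *m adjmx (Lmat b i).
Definition SL k (a b : bilmap R k) : 'M[C]_k := \sum_i adjmx (Lmat b i) *m Lmat a i.
Definition TR k (a b : bilmap R k) : 'M[C]_k := \sum_i adjmx (Rmat b i) *m Rmat a i.
Definition Q k (a b : bilmap R k) : 'M[C]_k :=
  (2:C) *: PL a b - (2:C) *: SL a b - (2:C) *: TR a b.
Lemma MmuQ k (a : bilmap R k) : Mmu a = Q a a. Proof. by []. Qed.

Definition lin k (a b : bilmap R k) (c : C) : bilmap R k :=
  fun i j => a i j + c *: b i j.

Lemma Lmat_lin k (a b : bilmap R k) c i : Lmat (lin a b c) i = Lmat a i + c *: Lmat b i.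
Proof. by apply/matrixP=> l j; rewrite !mxE. Qed.
Lemma Rmat_lin k (a b : bilmap R k) c i : Rmat (lin a b c) i = Rmat a i + c *: Rmat b i.
Proof. by apply/matrixP=> l j; rewrite !mxE. Qed.

End Work.
Lemma Q_comb (R : realType) k (x1 x2 x3 x4 y1 y2 y3 y4 z1 z2 z3 z4 : 'M[R[i]]_k) (c : R[i]) :
  (2:R[i]) *: (x1 + c *: (x2 + x3) + (c * c) *: x4)
  - (2:R[i]) *: (y1 + c *: (y3 + y2) + (c * c) *: y4)
  - (2:R[i]) *: (z1 + c *: (z3 + z2) + (c * c) *: z4) =
  ((2:R[i]) *: x1 - (2:R[i]) *: y1 - (2:R[i]) *: z1)
  + c *: (((2:R[i]) *: x2 - (2:R[i]) *: y2 - (2:R[i]) *: z2) + ((2:R[i]) *: x3 - (2:R[i]) *: y3 - (2:R[i]) *: z3))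
  + (c * c) *: ((2:R[i]) *: x4 - (2:R[i]) *: y4 - (2:R[i]) *: z4).
Proof. apply/matrixP=> p q; rewrite !mxE. ring. Qed.
Section Expand.
Variables (R : realType) (k : nat) (a b : bilmap R k) (s : R).
Let c : R[i] := (s%:C)%C.
Let hc : Num.conj c = c. Proof. exact: conjR. Qed.

Lemma PL_lin : PL (lin a b c) (lin a b c) =
  PL a a + c *: (PL a b + PL b a) + (c * c) *: PL b b.
Proof.
rewrite /PL; under eq_bigr do rewrite !Lmat_lin ajD ajZ hc.
by rewrite sum_expand.
Qed.
Lemma SL_lin : SL (lin a b c) (lin a b c) =
  SL a a + c *: (SL b a + SL a b) + (c * c) *: SL b b.
Proof.
rewrite /SL; under eq_bigr do rewrite !Lmat_lin ajD ajZ hc.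
by rewrite sum_expand.
Qed.
Lemma TR_lin : TR (lin a b c) (lin a b c) =
  TR a a + c *: (TR b a + TR a b) + (c * c) *: TR b b.
Proof.
rewrite /TR; under eq_bigr do rewrite !Rmat_lin ajD ajZ hc.
by rewrite sum_expand.
Qed.
Lemma Q_lin : Q (lin a b c) (lin a b c) =
  Q a a + c *: (Q a b + Q b a) + (c * c) *: Q b b.
Proof.
rewrite /Q PL_lin SL_lin TR_lin. apply: Q_comb.
Qed.
End Expand.

Lemma tr_expand (R : realType) k (A B D : 'M[R[i]]_k) (c : R[i]) :
  \tr ((A + c *: B + (c * c) *: D) *m (A + c *: B + (c * c) *: D)) =
  \tr (A *m A) + c * \tr (A *m B + B *m A) + c ^+ 2 * \tr (A *m D + D *m A + B *m B)
  + c ^+ 3 * \tr (B *m D + D *m B) + c ^+ 4 * \tr (D *m D).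
Proof.
rewrite !mulmxDl !mulmxDr -!scalemxAl -!scalemxAr !scalerA !mxtraceD !mxtraceZ.
ring.
Qed.

Lemma tr_expand2 (R : realType) k (A B D : 'M[R[i]]_k) (c : R[i]) :
  \tr (A + c *: B + (c * c) *: D) = \tr A + c * \tr B + c ^+ 2 * \tr D.
Proof. rewrite !mxtraceD !mxtraceZ; ring. Qed.

Lemma Re_poly (R : realType) (s : R) (t0 t1 t2 t3 t4 : R[i]) :
  complex.Re (t0 + (s%:C)%C * t1 + (s%:C)%C ^+ 2 * t2 + (s%:C)%C ^+ 3 * t3 + (s%:C)%C ^+ 4 * t4)
  = complex.Re t0 + s * complex.Re t1 + s ^+ 2 * complex.Re t2 + s ^+ 3 * complex.Re t3 + s ^+ 4 * complex.Re t4.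
Proof. by rewrite !ReD -!rmorphXn !ReRM. Qed.

Lemma Re_poly2 (R : realType) (s : R) (t0 t1 t2 : R[i]) :
  complex.Re (t0 + (s%:C)%C * t1 + (s%:C)%C ^+ 2 * t2)
  = complex.Re t0 + s * complex.Re t1 + s ^+ 2 * complex.Re t2.
Proof. by rewrite !ReD -!rmorphXn !ReRM. Qed.

Section Deriv.
Variable R : realType.
Local Notation C := (R[i]).
Local Notation Re := complex.Re.

Lemma tr_adj k (A : 'M[C]_k) : Re (\tr (A *m adjmx A)) = \sum_l \sum_j sqmod (A l j).
Proof.
have -> : \tr (A *m adjmx A) = \sum_l (A *m adjmx A) l l by [].
rewrite Re_sum; apply: eq_bigr => l _; rewrite mxE Re_sum.
by apply: eq_bigr => j _; rewrite !mxE Re_sqmod.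
Qed.

Lemma tr_sum k I (r : seq I) (P : pred I) (F : I -> 'M[C]_k) :
  \tr (\sum_(i <- r | P i) F i) = \sum_(i <- r | P i) \tr (F i).
Proof. by elim/big_rec2: _ => [|i y1 y2 _ <-]; rewrite ?mxtrace0 ?mxtraceD. Qed.

Lemma normsqE k (a : bilmap R k) : normsq a = Re (\tr (PL a a)).
Proof.
rewrite /PL tr_sum Re_sum /normsq; apply: eq_bigr => i _.
rewrite tr_adj exchange_big /=; apply: eq_bigr => j _; apply: eq_bigr => l _.
by rewrite mxE.
Qed.

Definition g0 k (a : bilmap R k) : R := Re (\tr (Mmu a *m Mmu a)).
Definition Kab k (a b : bilmap R k) : 'M[C]_k := Q a b + Q b a.
Definition g1 k (a b : bilmap R k) : R :=
  Re (\tr (Mmu a *m Kab a b + Kab a b *m Mmu a)).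
Definition n1 k (a b : bilmap R k) : R := Re (\tr (PL a b + PL b a)).
Definition dF k (a b : bilmap R k) : R :=
  (g1 a b * normsq a - 2 * g0 a * n1 a b) / normsq a ^+ 3.

Lemma derivF k (a b : bilmap R k) : normsq a != 0 ->
  is_derive (0:R) (1:R)
    (fun s : R => Fk (fun i j => a i j + ((s%:C)%C : C) *: b i j)) (dF a b).
Proof.
move=> h0.
have E : (fun s : R => Fk (fun i j => a i j + ((s%:C)%C : C) *: b i j)) =
  (fun s : R => (g0 a + s * g1 a b
     + s ^+ 2 * Re (\tr (Mmu a *m Q b b + Q b b *m Mmu a + Kab a b *m Kab a b))
     + s ^+ 3 * Re (\tr (Kab a b *m Q b b + Q b b *m Kab a b))
     + s ^+ 4 * Re (\tr (Q b b *m Q b b))) /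
   (normsq a + s * n1 a b + s ^+ 2 * normsq b) ^+ 2).
  apply: funext => s.
  rewrite /Fk.
  change (fun i j => a i j + ((s%:C)%C : C) *: b i j) with (lin a b (s%:C)%C).
  rewrite !MmuQ Q_lin -!MmuQ tr_expand Re_poly !normsqE PL_lin tr_expand2 Re_poly2.
  by [].
rewrite E /dF; exact: rat_deriv.
Qed.
End Deriv.
Section Block.
Variables (R : realType) (n m : nat).
Local Notation C := (R[i]).
Local Notation M := ('M[C]_(n + m)).

Lemma split_l (x : 'I_n) : fintype.split (lshift m x) = inl x.
Proof. exact: (@unsplitK n m (inl x)). Qed.
Lemma split_r (x : 'I_m) : fintype.split (rshift n x) = inr x.
Proof. exact: (@unsplitK n m (inr x)). Qed.

Lemma ulM (A B : M) : ulsubmx (A *m B) = ulsubmx A *m ulsubmx B + ursubmx A *m dlsubmx B.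
Proof. by rewrite -{1}[A]submxK -{1}[B]submxK mulmx_block block_mxKul. Qed.
Lemma urM (A B : M) : ursubmx (A *m B) = ulsubmx A *m ursubmx B + ursubmx A *m drsubmx B.
Proof. by rewrite -{1}[A]submxK -{1}[B]submxK mulmx_block block_mxKur. Qed.
Lemma dlM (A B : M) : dlsubmx (A *m B) = dlsubmx A *m ulsubmx B + drsubmx A *m dlsubmx B.
Proof. by rewrite -{1}[A]submxK -{1}[B]submxK mulmx_block block_mxKdl. Qed.
Lemma drM (A B : M) : drsubmx (A *m B) = dlsubmx A *m ursubmx B + drsubmx A *m drsubmx B.
Proof. by rewrite -{1}[A]submxK -{1}[B]submxK mulmx_block block_mxKdr. Qed.

Lemma ul_adj (A : M) : ulsubmx (adjmx A) = adjmx (ulsubmx A).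
Proof. by apply/matrixP=> i j; rewrite !mxE. Qed.
Lemma dr_adj (A : M) : drsubmx (adjmx A) = adjmx (drsubmx A).
Proof. by apply/matrixP=> i j; rewrite !mxE. Qed.
Lemma ur_adj0 (A : M) : dlsubmx A = 0 -> ursubmx (adjmx A) = 0.
Proof.
move=> H; apply/matrixP=> i j; rewrite !mxE.
have := congr1 (fun N : 'M[C]_(m, n) => N j i) H; rewrite !mxE => ->; exact: rmorph0.
Qed.
Lemma dl_adj0 (A : M) : ursubmx A = 0 -> dlsubmx (adjmx A) = 0.
Proof.
move=> H; apply/matrixP=> i j; rewrite !mxE.
have := congr1 (fun N : 'M[C]_(n, m) => N j i) H; rewrite !mxE => ->; exact: rmorph0.
Qed.

Lemma ul_sum I (r : seq I) (P : pred I) (F : I -> M) :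
  ulsubmx (\sum_(i <- r | P i) F i) = \sum_(i <- r | P i) ulsubmx (F i).
Proof.
elim/big_rec2: _ => [|i y1 y2 _ <-]; apply/matrixP=> p q; rewrite !mxE //.
Qed.
Lemma dr_sum I (r : seq I) (P : pred I) (F : I -> M) :
  drsubmx (\sum_(i <- r | P i) F i) = \sum_(i <- r | P i) drsubmx (F i).
Proof.
elim/big_rec2: _ => [|i y1 y2 _ <-]; apply/matrixP=> p q; rewrite !mxE //.
Qed.
Lemma ur_sum I (r : seq I) (P : pred I) (F : I -> M) :
  ursubmx (\sum_(i <- r | P i) F i) = \sum_(i <- r | P i) ursubmx (F i).
Proof.
elim/big_rec2: _ => [|i y1 y2 _ <-]; apply/matrixP=> p q; rewrite !mxE //.
Qed.
Lemma dl_sum I (r : seq I) (P : pred I) (F : I -> M) :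
  dlsubmx (\sum_(i <- r | P i) F i) = \sum_(i <- r | P i) dlsubmx (F i).
Proof.
elim/big_rec2: _ => [|i y1 y2 _ <-]; apply/matrixP=> p q; rewrite !mxE //.
Qed.


Definition bd (A : M) := ursubmx A = 0 /\ dlsubmx A = 0.
Lemma bdM A B : bd A -> bd B -> bd (A *m B).
Proof.
move=> [a1 a2] [b1 b2]; split; [rewrite urM a1 b1|rewrite dlM a2 b2];
  by rewrite mulmx0 mul0mx addr0.
Qed.
Lemma bd_adj A : bd A -> bd (adjmx A).
Proof. by move=> [a1 a2]; split; [apply: ur_adj0|apply: dl_adj0]. Qed.
Lemma bdZB (c : C) A B D : bd A -> bd B -> bd D -> bd (c *: A - c *: B - c *: D).
Proof.
move=> [a1 a2] [b1 b2] [d1 d2]; split; apply/matrixP=> p q.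
  have := congr1 (fun N : 'M[C]_(n, m) => N p q) a1.
  have := congr1 (fun N : 'M[C]_(n, m) => N p q) b1.
  have := congr1 (fun N : 'M[C]_(n, m) => N p q) d1.
  by rewrite !mxE => -> -> ->; rewrite !mulr0 !subr0.
have := congr1 (fun N : 'M[C]_(m, n) => N p q) a2.
have := congr1 (fun N : 'M[C]_(m, n) => N p q) b2.
have := congr1 (fun N : 'M[C]_(m, n) => N p q) d2.
by rewrite !mxE => -> -> ->; rewrite !mulr0 !subr0.
Qed.
Lemma bd_sum I (r : seq I) (P : pred I) (F : I -> M) :
  (forall i, bd (F i)) -> bd (\sum_(i <- r | P i) F i).
Proof.
move=> H; split; rewrite ?ur_sum ?dl_sum; apply: big1 => i _; by case: (H i).
Qed.

Section Sums.
Variables (F G : 'I_(n + m) -> M) (A : 'I_n -> 'M[C]_n) (B : 'I_m -> 'M[C]_m).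
Hypothesis FL : forall x, F (lshift m x) = block_mx (A x) 0 0 0.
Hypothesis FR : forall x, F (rshift n x) = block_mx 0 0 0 (B x).

Lemma bdF i : bd (F i).
Proof.
by case: (split_ordP i) => x ->; rewrite ?FL ?FR; split;
  rewrite ?block_mxKur ?block_mxKdl.
Qed.

Lemma S1 : ulsubmx (\sum_i F i *m adjmx (G i)) =
  \sum_x A x *m adjmx (ulsubmx (G (lshift m x))).
Proof.
rewrite ul_sum big_split_ord /= [X in _ + X]big1 ?addr0.
  by apply: eq_bigr => x _; rewrite FL ulM block_mxKul block_mxKur mul0mx addr0 ul_adj.
by move=> x _; rewrite FR ulM block_mxKul block_mxKur !mul0mx addr0.
Qed.
Lemma S2 : ulsubmx (\sum_i G i *m adjmx (F i)) =
  \sum_x ulsubmx (G (lshift m x)) *m adjmx (A x).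
Proof.
rewrite ul_sum big_split_ord /= [X in _ + X]big1 ?addr0.
  apply: eq_bigr => x _; rewrite ulM ul_adj (dl_adj0 (proj1 (bdF _))) FL.
  by rewrite block_mxKul mulmx0 addr0.
by move=> x _; rewrite ulM ul_adj (dl_adj0 (proj1 (bdF _))) FR block_mxKul aj0 !mulmx0 addr0.
Qed.
Lemma S3 : ulsubmx (\sum_i adjmx (G i) *m F i) =
  \sum_x adjmx (ulsubmx (G (lshift m x))) *m A x.
Proof.
rewrite ul_sum big_split_ord /= [X in _ + X]big1 ?addr0.
  apply: eq_bigr => x _; rewrite ulM ul_adj (proj2 (bdF _)) FL.
  by rewrite block_mxKul mulmx0 addr0.
by move=> x _; rewrite ulM (proj2 (bdF _)) FR block_mxKul !mulmx0 addr0.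
Qed.
Lemma S4 : ulsubmx (\sum_i adjmx (F i) *m G i) =
  \sum_x adjmx (A x) *m ulsubmx (G (lshift m x)).
Proof.
rewrite ul_sum big_split_ord /= [X in _ + X]big1 ?addr0.
  apply: eq_bigr => x _; rewrite ulM ul_adj (ur_adj0 (proj2 (bdF _))) FL.
  by rewrite block_mxKul mul0mx addr0.
by move=> x _; rewrite ulM ul_adj (ur_adj0 (proj2 (bdF _))) FR block_mxKul aj0 !mul0mx addr0.
Qed.

Lemma D1 : drsubmx (\sum_i F i *m adjmx (G i)) =
  \sum_x B x *m adjmx (drsubmx (G (rshift n x))).
Proof.
rewrite dr_sum big_split_ord /= big1 ?add0r.
  by apply: eq_bigr => x _; rewrite FR drM block_mxKdr block_mxKdl mul0mx add0r dr_adj.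
by move=> x _; rewrite FL drM block_mxKdr block_mxKdl !mul0mx addr0.
Qed.
Lemma D2 : drsubmx (\sum_i G i *m adjmx (F i)) =
  \sum_x drsubmx (G (rshift n x)) *m adjmx (B x).
Proof.
rewrite dr_sum big_split_ord /= big1 ?add0r.
  apply: eq_bigr => x _; rewrite drM dr_adj (ur_adj0 (proj2 (bdF _))) FR.
  by rewrite block_mxKdr mulmx0 add0r.
by move=> x _; rewrite drM dr_adj (ur_adj0 (proj2 (bdF _))) FL block_mxKdr aj0 !mulmx0 addr0.
Qed.
Lemma D3 : drsubmx (\sum_i adjmx (G i) *m F i) =
  \sum_x adjmx (drsubmx (G (rshift n x))) *m B x.
Proof.
rewrite dr_sum big_split_ord /= big1 ?add0r.
  apply: eq_bigr => x _; rewrite drM dr_adj (proj1 (bdF _)) FR.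
  by rewrite block_mxKdr mulmx0 add0r.
by move=> x _; rewrite drM (proj1 (bdF _)) FL block_mxKdr !mulmx0 addr0.
Qed.
Lemma D4 : drsubmx (\sum_i adjmx (F i) *m G i) =
  \sum_x adjmx (B x) *m drsubmx (G (rshift n x)).
Proof.
rewrite dr_sum big_split_ord /= big1 ?add0r.
  apply: eq_bigr => x _; rewrite drM dr_adj (dl_adj0 (proj1 (bdF _))) FR.
  by rewrite block_mxKdr mul0mx add0r.
by move=> x _; rewrite drM dr_adj (dl_adj0 (proj1 (bdF _))) FL block_mxKdr aj0 !mul0mx addr0.
Qed.
End Sums.

Lemma ulD (X Y : M) : ulsubmx (X + Y) = ulsubmx X + ulsubmx Y.
Proof. by apply/matrixP=> p q; rewrite !mxE. Qed.
Lemma drD (X Y : M) : drsubmx (X + Y) = drsubmx X + drsubmx Y.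
Proof. by apply/matrixP=> p q; rewrite !mxE. Qed.
Lemma ulZB (c : C) (X Y Z : M) :
  ulsubmx (c *: X - c *: Y - c *: Z) = c *: ulsubmx X - c *: ulsubmx Y - c *: ulsubmx Z.
Proof. by apply/matrixP=> p q; rewrite !mxE. Qed.
Lemma drZB (c : C) (X Y Z : M) :
  drsubmx (c *: X - c *: Y - c *: Z) = c *: drsubmx X - c *: drsubmx Y - c *: drsubmx Z.
Proof. by apply/matrixP=> p q; rewrite !mxE. Qed.
Lemma tr_blk (X : M) : \tr X = \tr (ulsubmx X) + \tr (drsubmx X).
Proof. by rewrite -{1}[X]submxK mxtrace_block. Qed.

Section DS.
Variables (a : bilmap R n) (b : bilmap R m).
Definition dsum : bilmap R (n + m) := fun i j =>
  match fintype.split i, fintype.split j with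
  | inl x, inl y => col_mx (a x y) 0
  | inr x, inr y => col_mx 0 (b x y)
  | _, _ => 0
  end.
Definition p1 (v : bilmap R (n + m)) : bilmap R n :=
  fun x y => usubmx (v (lshift m x) (lshift m y)).
Definition p2 (v : bilmap R (n + m)) : bilmap R m :=
  fun x y => dsubmx (v (rshift n x) (rshift n y)).

Lemma Lds_l x : Lmat dsum (lshift m x) = block_mx (Lmat a x) 0 0 0.
Proof.
rewrite -[LHS]submxK; congr block_mx; apply/matrixP=> p q;
  by rewrite !mxE /dsum ?split_l ?split_r ?col_mxEu ?col_mxEd ?mxE.
Qed.
Lemma Lds_r x : Lmat dsum (rshift n x) = block_mx 0 0 0 (Lmat b x).
Proof.
rewrite -[LHS]submxK; congr block_mx; apply/matrixP=> p q;
  by rewrite !mxE /dsum ?split_l ?split_r ?col_mxEu ?col_mxEd ?mxE.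
Qed.
Lemma Rds_l x : Rmat dsum (lshift m x) = block_mx (Rmat a x) 0 0 0.
Proof.
rewrite -[LHS]submxK; congr block_mx; apply/matrixP=> p q;
  by rewrite !mxE /dsum ?split_l ?split_r ?col_mxEu ?col_mxEd ?mxE.
Qed.
Lemma Rds_r x : Rmat dsum (rshift n x) = block_mx 0 0 0 (Rmat b x).
Proof.
rewrite -[LHS]submxK; congr block_mx; apply/matrixP=> p q;
  by rewrite !mxE /dsum ?split_l ?split_r ?col_mxEu ?col_mxEd ?mxE.
Qed.
Lemma Lv_ul v x : ulsubmx (Lmat v (lshift m x)) = Lmat (p1 v) x.
Proof. by apply/matrixP=> p q; rewrite !mxE. Qed.
Lemma Lv_dr v x : drsubmx (Lmat v (rshift n x)) = Lmat (p2 v) x.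
Proof. by apply/matrixP=> p q; rewrite !mxE. Qed.
Lemma Rv_ul v x : ulsubmx (Rmat v (lshift m x)) = Rmat (p1 v) x.
Proof. by apply/matrixP=> p q; rewrite !mxE. Qed.
Lemma Rv_dr v x : drsubmx (Rmat v (rshift n x)) = Rmat (p2 v) x.
Proof. by apply/matrixP=> p q; rewrite !mxE. Qed.
Lemma p1_ds : p1 dsum = a.
Proof.
apply: funext => x; apply: funext => y; apply/matrixP=> p q.
by rewrite /p1 /dsum !split_l !mxE split_l.
Qed.
Lemma p2_ds : p2 dsum = b.
Proof.
apply: funext => x; apply: funext => y; apply/matrixP=> p q.
by rewrite /p2 /dsum !split_r !mxE split_r.
Qed.

Lemma ulPL v : ulsubmx (PL dsum v) = PL a (p1 v).
Proof. by rewrite /PL (S1 _ Lds_l Lds_r); under eq_bigr do rewrite Lv_ul. Qed.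
Lemma ulPL' v : ulsubmx (PL v dsum) = PL (p1 v) a.
Proof. by rewrite /PL (S2 _ Lds_l Lds_r); under eq_bigr do rewrite Lv_ul. Qed.
Lemma drPL v : drsubmx (PL dsum v) = PL b (p2 v).
Proof. by rewrite /PL (D1 _ Lds_l Lds_r); under eq_bigr do rewrite Lv_dr. Qed.
Lemma drPL' v : drsubmx (PL v dsum) = PL (p2 v) b.
Proof. by rewrite /PL (D2 _ Lds_l Lds_r); under eq_bigr do rewrite Lv_dr. Qed.

Lemma ulQ v : ulsubmx (Q dsum v) = Q a (p1 v).
Proof.
rewrite /Q ulZB ulPL /SL /TR (S3 _ Lds_l Lds_r) (S3 _ Rds_l Rds_r).
by under eq_bigr do rewrite Lv_ul; under [X in _ - _ *: X]eq_bigr do rewrite Rv_ul.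
Qed.
Lemma ulQ' v : ulsubmx (Q v dsum) = Q (p1 v) a.
Proof.
rewrite /Q ulZB ulPL' /SL /TR (S4 _ Lds_l Lds_r) (S4 _ Rds_l Rds_r).
by under eq_bigr do rewrite Lv_ul; under [X in _ - _ *: X]eq_bigr do rewrite Rv_ul.
Qed.
Lemma drQ v : drsubmx (Q dsum v) = Q b (p2 v).
Proof.
rewrite /Q drZB drPL /SL /TR (D3 _ Lds_l Lds_r) (D3 _ Rds_l Rds_r).
by under eq_bigr do rewrite Lv_dr; under [X in _ - _ *: X]eq_bigr do rewrite Rv_dr.
Qed.
Lemma drQ' v : drsubmx (Q v dsum) = Q (p2 v) b.
Proof.
rewrite /Q drZB drPL' /SL /TR (D4 _ Lds_l Lds_r) (D4 _ Rds_l Rds_r).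
by under eq_bigr do rewrite Lv_dr; under [X in _ - _ *: X]eq_bigr do rewrite Rv_dr.
Qed.

Lemma bdQ : bd (Q dsum dsum).
Proof.
apply: bdZB; apply: bd_sum => i; apply: bdM; rewrite ?bd_adj //;
  by [apply: (bdF Lds_l Lds_r) | apply: (bdF Rds_l Rds_r)
     | apply: bd_adj; apply: (bdF Lds_l Lds_r)
     | apply: bd_adj; apply: (bdF Rds_l Rds_r)].
Qed.
End DS.
End Block.
Section Final.
Variables (R : realType) (n m : nat) (a : bilmap R n) (b : bilmap R m).
Local Notation C := (R[i]).
Local Notation Re := complex.Re.
Local Notation ds := (dsum a b).

Lemma M_ds : Mmu ds = block_mx (Mmu a) 0 0 (Mmu b).
Proof.
have [h1 h2] := bdQ a b.
by rewrite MmuQ -[LHS]submxK ulQ drQ p1_ds p2_ds h1 h2 -!MmuQ.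
Qed.

Lemma g0_ds : g0 ds = g0 a + g0 b.
Proof.
by rewrite /g0 M_ds mulmx_block !mulmx0 !mul0mx !addr0 !add0r mxtrace_block ReD.
Qed.

Lemma g1_ds v : g1 ds v = g1 a (p1 v) + g1 b (p2 v).
Proof.
rewrite /g1 tr_blk ulD drD !ulM !drM M_ds block_mxKul block_mxKur block_mxKdl block_mxKdr.
rewrite !mul0mx !mulmx0 !addr0 !add0r /Kab ulD drD ulQ ulQ' drQ drQ'.
by rewrite ReD.
Qed.

Lemma n0_ds : normsq ds = normsq a + normsq b.
Proof. by rewrite !normsqE tr_blk ulPL drPL p1_ds p2_ds ReD. Qed.

Lemma n1_ds v : n1 ds v = n1 a (p1 v) + n1 b (p2 v).
Proof. by rewrite /n1 tr_blk ulD drD ulPL ulPL' drPL drPL' ReD. Qed.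
End Final.
Section Scale.
Variables (R : realType) (k : nat).
Local Notation C := (R[i]).
Local Notation Re := complex.Re.

Definition sc (t : R) (a : bilmap R k) : bilmap R k := fun i j => ((t%:C)%C : C) *: a i j.

Lemma Lmat_sc t a i : Lmat (sc t a) i = ((t%:C)%C : C) *: Lmat a i.
Proof. by apply/matrixP=> p q; rewrite !mxE. Qed.
Lemma Rmat_sc t a i : Rmat (sc t a) i = ((t%:C)%C : C) *: Rmat a i.
Proof. by apply/matrixP=> p q; rewrite !mxE. Qed.

Lemma sum_sc (c : C) (X Y : 'I_k -> 'M[C]_k) :
  \sum_i (c *: X i) *m (c *: Y i) = (c * c) *: \sum_i X i *m Y i.
Proof.
rewrite scaler_sumr; apply: eq_bigr => i _.
by rewrite -scalemxAl -scalemxAr scalerA.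
Qed.

Lemma Q_comb2 (X Y Z : 'M[C]_k) (c : C) :
  (2:C) *: (c *: X) - (2:C) *: (c *: Y) - (2:C) *: (c *: Z) =
  c *: ((2:C) *: X - (2:C) *: Y - (2:C) *: Z).
Proof. apply/matrixP=> p q; rewrite !mxE. ring. Qed.

Lemma PL_sc t a b : PL (sc t a) (sc t b) = ((t * t)%:C)%C *: PL a b.
Proof.
by rewrite /PL; under eq_bigr do rewrite !Lmat_sc ajZ conjR; rewrite sum_sc -rmorphM.
Qed.
Lemma SL_sc t a b : SL (sc t a) (sc t b) = ((t * t)%:C)%C *: SL a b.
Proof.
by rewrite /SL; under eq_bigr do rewrite !Lmat_sc ajZ conjR; rewrite sum_sc -rmorphM.
Qed.
Lemma TR_sc t a b : TR (sc t a) (sc t b) = ((t * t)%:C)%C *: TR a b.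
Proof.
by rewrite /TR; under eq_bigr do rewrite !Rmat_sc ajZ conjR; rewrite sum_sc -rmorphM.
Qed.
Lemma Q_sc t a b : Q (sc t a) (sc t b) = ((t * t)%:C)%C *: Q a b.
Proof. by rewrite /Q PL_sc SL_sc TR_sc Q_comb2. Qed.

Lemma ReRM' (x : R) (z : C) : Re (((x%:C)%C : C) * z) = x * Re z.
Proof. exact: ReRM. Qed.

Lemma g0_sc t a : g0 (sc t a) = t ^+ 4 * g0 a.
Proof.
rewrite /g0 !MmuQ Q_sc -scalemxAl -scalemxAr scalerA mxtraceZ -rmorphM ReRM.
by congr (_ * _); rewrite !exprS expr0 mulr1 !mulrA.
Qed.

Lemma g1_sc t a b : g1 (sc t a) (sc t b) = t ^+ 4 * g1 a b.
Proof.
rewrite /g1 /Kab !MmuQ !Q_sc -scalerDr -!scalemxAl -!scalemxAr !scalerA -scalerDr.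
rewrite mxtraceZ -rmorphM ReRM.
by congr (_ * _); rewrite !exprS expr0 mulr1 !mulrA.
Qed.

Lemma n0_sc t a : normsq (sc t a) = t ^+ 2 * normsq a.
Proof. by rewrite !normsqE PL_sc mxtraceZ ReRM expr2. Qed.

Lemma n1_sc t a b : n1 (sc t a) (sc t b) = t ^+ 2 * n1 a b.
Proof. by rewrite /n1 !PL_sc -scalerDr mxtraceZ ReRM expr2. Qed.

Lemma sc_inv t v : t != 0 -> sc t (sc t^-1 v) = v.
Proof.
move=> ht; apply: funext => i; apply: funext => j.
by rewrite /sc scalerA -rmorphM mulfV // rmorph1 scale1r.
Qed.
End Scale.
Section Pos.
Variables (R : realType) (k : nat).
Local Notation C := (R[i]).
Local Notation Re := complex.Re.

Lemma sqmod_gt0 (z : C) : z != 0 -> 0 < sqmod z.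
Proof.
case: z => x y hz; rewrite /sqmod /=.
rewrite lt_def addr_ge0 ?sqr_ge0 // andbT.
apply/negP => h; move: hz h; rewrite paddr_eq0 ?sqr_ge0 //.
by move=> hz /andP []; rewrite !sqrf_eq0 => /eqP hx /eqP hy; move: hz; rewrite hx hy eqxx.
Qed.

Lemma sum_ge_term (F : 'I_k -> R) i : (forall j, 0 <= F j) -> F i <= \sum_j F j.
Proof. by move=> h; rewrite (bigD1 i) //= lerDl sumr_ge0. Qed.

Lemma n0_pos (a : bilmap R k) : (exists i j, a i j != 0) -> 0 < normsq a.
Proof.
case=> i [j hij].
have [l hl] : exists l, a i j l 0 != 0.
  apply/existsP; apply: contraR hij; rewrite negb_exists => /forallP h.
  apply/eqP/matrixP=> l q; rewrite (ord1 q) mxE; exact/eqP/negPn/h.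
apply: (lt_le_trans (sqmod_gt0 hl)); rewrite /normsq.
apply: (le_trans _ (@sum_ge_term (fun i => \sum_j \sum_l sqmod (a i j l 0)) i _)); last first.
  by move=> i'; apply: sumr_ge0 => j' _; apply: sumr_ge0 => l' _; exact: sqmod_ge0.
apply: (le_trans _ (@sum_ge_term (fun j => \sum_l sqmod (a i j l 0)) j _)); last first.
  by move=> j'; apply: sumr_ge0 => l' _; exact: sqmod_ge0.
by apply: (@sum_ge_term (fun l => sqmod (a i j l 0))) => l'; exact: sqmod_ge0.
Qed.

Lemma conj2 : Num.conj (2 : C) = 2.
Proof. exact: rmorph_nat. Qed.

Lemma PLh (a : bilmap R k) : adjmx (PL a a) = PL a a.
Proof. rewrite /PL aj_sum; apply: eq_bigr => i _; by rewrite ajM ajK. Qed.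
Lemma SLh (a : bilmap R k) : adjmx (SL a a) = SL a a.
Proof. rewrite /SL aj_sum; apply: eq_bigr => i _; by rewrite ajM ajK. Qed.
Lemma TRh (a : bilmap R k) : adjmx (TR a a) = TR a a.
Proof. rewrite /TR aj_sum; apply: eq_bigr => i _; by rewrite ajM ajK. Qed.
Lemma Mherm (a : bilmap R k) : adjmx (Mmu a) = Mmu a.
Proof. by rewrite MmuQ /Q !ajB !ajZ conj2 PLh SLh TRh. Qed.

Lemma Re2M (z : C) : Re (2 * z) = 2 * Re z.
Proof. have -> : (2 : C) = ((2 : R)%:C)%C by rewrite rmorph_nat. exact: ReRM. Qed.

Lemma trN (A : 'M[C]_k) : \tr (- A) = - \tr A.
Proof. exact: raddfN. Qed.

Lemma trQ (X Y Z : 'M[C]_k) :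
  Re (\tr ((2:C) *: X - (2:C) *: Y - (2:C) *: Z)) =
  2 * Re (\tr X) - 2 * Re (\tr Y) - 2 * Re (\tr Z).
Proof. rewrite !mxtraceD !trN !mxtraceZ !ReD !ReN !Re2M. done. Qed.

Lemma trM (a : bilmap R k) : Re (\tr (Mmu a)) = - (2 * normsq a).
Proof.
rewrite MmuQ /Q trQ.
have h1 : Re (\tr (SL a a)) = normsq a.
  rewrite normsqE /SL /PL !tr_sum; congr Re; apply: eq_bigr => i _.
  exact: mxtrace_mulC.
have h2 : Re (\tr (TR a a)) = normsq a.
  rewrite /TR tr_sum Re_sum.
  under eq_bigr do rewrite mxtrace_mulC tr_adj.
  rewrite /normsq.
  under eq_bigr do rewrite exchange_big /=.
  rewrite exchange_big /=; apply: eq_bigr => i _; apply: eq_bigr => j _.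
  by apply: eq_bigr => l _; rewrite mxE.
rewrite h1 h2 -normsqE; lra.
Qed.

Lemma g0_pos (a : bilmap R k) : 0 < normsq a -> 0 < g0 a.
Proof.
move=> hn.
have [l hl] : exists l, Mmu a l l != 0.
  apply/existsP; apply: contraLR hn; rewrite negb_exists => /forallP h.
  have : \tr (Mmu a) = 0 by apply: big1 => l _; apply/eqP/negPn/h.
  move/(congr1 (@complex.Re R)); rewrite trM /= => h0; rewrite -leNgt.
  have : normsq a = 0 by lra.
  by move=> ->.
rewrite /g0 -{2}(Mherm a) tr_adj.
apply: (lt_le_trans (sqmod_gt0 hl)).
apply: (le_trans _ (@sum_ge_term (fun l => \sum_j sqmod (Mmu a l j)) l _)); last first.
  by move=> i; apply: sumr_ge0 => j _; exact: sqmod_ge0.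
by apply: (@sum_ge_term (fun j => sqmod (Mmu a l j))) => j; exact: sqmod_ge0.
Qed.
End Pos.

Section Main.
Variable R : realType.
Local Notation C := (R[i]).

Lemma crit_eq k (a : bilmap R k) : critical a ->
  0 < normsq a /\ forall v, g1 a v * normsq a = 2 * g0 a * n1 a v.
Proof.
case=> hnz hd; have hN := n0_pos hnz; split => // v.
have e1 := @derive_val _ _ _ _ _ _ _ (hd v).
have e2 := @derive_val _ _ _ _ _ _ _ (derivF v (lt0r_neq0 hN)).
have : dF a v = 0 by rewrite -e2 e1.
rewrite /dF => /eqP; rewrite mulf_eq0 invr_eq0 expf_eq0 /= (negbTE (lt0r_neq0 hN)) orbF.
rewrite subr_eq0 => /eqP ->; by [].
Qed.

Lemma sum2_blk n m (V : zmodType) (f : 'I_(n + m) -> 'I_(n + m) -> V)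
  (h1 : 'I_n -> 'I_n -> V) (h2 : 'I_m -> 'I_m -> V) :
  (forall x y, f (lshift m x) (lshift m y) = h1 x y) ->
  (forall x y, f (lshift m x) (rshift n y) = 0) ->
  (forall x y, f (rshift n x) (lshift m y) = 0) ->
  (forall x y, f (rshift n x) (rshift n y) = h2 x y) ->
  \sum_i \sum_j f i j = \sum_x \sum_y h1 x y + \sum_x \sum_y h2 x y.
Proof.
move=> e1 e2 e3 e4; rewrite big_split_ord /=; congr (_ + _);
  apply: eq_bigr => x _; rewrite big_split_ord /=.
  rewrite [X in _ + X]big1 ?addr0; first by apply: eq_bigr => y _; exact: e1.
  by move=> y _; exact: e2.
rewrite [X in X + _]big1 ?add0r; first by apply: eq_bigr => y _; exact: e4.
by move=> y _; exact: e3.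
Qed.

Lemma sum_col n m p I (r : seq I) (P : pred I) (A : I -> 'M[C]_(n, p)) (B : I -> 'M[C]_(m, p)) :
  \sum_(i <- r | P i) col_mx (A i) (B i) =
  col_mx (\sum_(i <- r | P i) A i) (\sum_(i <- r | P i) B i).
Proof.
by elim/big_rec3: _ => [|i x y z _ ->]; rewrite ?col_mx0 ?add_col_mx.
Qed.

End Main.

Unset Implicit Arguments.
Theorem mainTheorem4 (R : realType) (n m : nat)
    (mu : bilmap R n) (lam : bilmap R m) :
  critical mu -> critical lam ->
  exists t : R[i], exists rho : bilmap R (n + m),
    (forall (X1 X2 : 'cV[R[i]]_n) (Y1 Y2 : 'cV[R[i]]_m),
        bil_apply rho (col_mx X1 Y1) (col_mx X2 Y2)
        = col_mx (bil_apply mu X1 X2) (t *: bil_apply lam Y1 Y2))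
    /\ critical rho.
Proof.
move=> hmu hlam.
have [hNm cm] := crit_eq hmu; have [hNl cl] := crit_eq hlam.
have hGm := g0_pos hNm; have hGl := g0_pos hNl.
pose s := g0 mu * normsq lam / (normsq mu * g0 lam).
have hs : 0 < s by rewrite /s divr_gt0 ?mulr_gt0.
pose tau := Num.sqrt s.
have htau : 0 < tau by rewrite sqrtr_gt0.
have htau2 : tau ^+ 2 = s by rewrite sqr_sqrtr // ltW.
pose lam' := sc tau lam.
exists (tau%:C)%C, (dsum mu lam'); split.
  move=> X1 X2 Y1 Y2.
  rewrite /bil_apply (@sum2_blk n m _ _
     (fun x y => col_mx ((X1 x 0 * X2 y 0) *: mu x y) 0)
     (fun x y => col_mx 0 ((tau%:C)%C *: ((Y1 x 0 * Y2 y 0) *: lam x y)))).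
  - under eq_bigr do rewrite sum_col.
    under [X in _ + X]eq_bigr do rewrite sum_col.
    rewrite !sum_col !big1_eq add_col_mx addr0 add0r; congr col_mx.
    by rewrite scaler_sumr; apply: eq_bigr => x _; rewrite scaler_sumr.
  - by move=> x y; rewrite /dsum !split_l !col_mxEu scale_col_mx scaler0.
  - by move=> x y; rewrite /dsum split_l split_r scaler0.
  - by move=> x y; rewrite /dsum split_r split_l scaler0.
  - move=> x y; rewrite /dsum !split_r !col_mxEd scale_col_mx scaler0 /lam' /sc.
    by rewrite !scalerA mulrC.
split.
  case: hmu => [[i [j hij]] _]; exists (lshift m i), (lshift m j).
  by rewrite /dsum !split_l col_mx_eq0 negb_and hij.
move=> v.
have hN : normsq (dsum mu lam') != 0.
  rewrite n0_ds /lam' n0_sc; apply: lt0r_neq0; apply: addr_gt0 => //.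
  by apply: mulr_gt0 => //; apply: exprn_gt0.
apply: (is_derive_eq (derivF v hN)).
rewrite /dF g1_ds n0_ds g0_ds n1_ds.
have -> : p2 v = sc tau (sc tau^-1 (p2 v)) by rewrite sc_inv // gt_eqF.
rewrite /lam' g1_sc n0_sc g0_sc n1_sc.
have e1 := cm (p1 v); have e2 := cl (sc tau^-1 (p2 v)).
set w := sc tau^-1 (p2 v) in e2 *.
have -> : tau ^+ 4 = s ^+ 2 by rewrite -htau2 -exprM.
rewrite htau2.
apply/eqP; rewrite mulf_eq0; apply/orP; left; apply/eqP.
have hNm0 := lt0r_neq0 hNm; have hNl0 := lt0r_neq0 hNl; have hGl0 := lt0r_neq0 hGl.
have E1 : g1 mu (p1 v) = 2 * g0 mu * n1 mu (p1 v) / normsq mu by rewrite -e1 mulfK.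
have E2 : g1 lam w = 2 * g0 lam * n1 lam w / normsq lam by rewrite -e2 mulfK.
rewrite E1 E2 /s; field.
by rewrite hNm0 hNl0 hGl0.
Qed.
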